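(* Let $(G,t)$ be an infinite biosphere. For every vertex $v\in G$ there exists an $\mathrm{IAP}\cap\mathrm{CONV}\cap\mathrm{CA}\cap\mathrm{REF}$-maximal set containing $v$; that is, a nonempty set $S$ of vertices of $G$ with $v\in S$ and $S\in \mathrm{IAP}\cap\mathrm{CONV}\cap\mathrm{CA}\cap\mathrm{REF}$, such that no proper superset of $S$ belongs to $\mathrm{IAP}\cap\mathrm{CONV}\cap\mathrm{CA}\cap\mathrm{REF}$.
   Context: An infinite biosphere is a directed graph $G$ together with a function $t$ assigning a real number $t(v)$ to each vertex, such that: (1) if $v$ is a parent of $w$ (edge from $v$ to $w$) then $t(v)<t(w)$; (2) for every $r\in\mathbb R$ at most finitely many vertices $v$ have $t(v)<r$; (3) every vertex has finitely many children; (4) $G$ is infinite. $v$ is an ancestor of $w$ (and $w$ a descendant of $v$) if there is a directed path $v=v_1,\dots,v_n=w$ with $n>1$. A $G$-subset is a set of vertices. $\mathrm{IAP}$: $G$-subsets $S$ such that no $v\in S$ has both infinitely many descendants in $S$ and infinitely many non-descendants in $S$. $\mathrm{CONV}$: $G$-subsets $S$ such that every $v\in G$ having an ancestor in $S$ and a descendant in $S$ lies in $S$. $\mathrm{CA}$: $G$-subsets $S$ for which there exists $v\in S$ such that every $w\in S$ with $w\neq v$ is a descendant of $v$. $\mathrm{REF}$: $G$-subsets $S$ such that every $v\in S$ with infinitely many descendants in $G$ has infinitely many descendants in $S$. *)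

(* Defs.v *)
From Stdlib Require Import Reals List Relations.
Open Scope R_scope.

Definition finite_pred {V : Type} (P : V -> Prop) : Prop :=
  exists l : list V, forall x, P x -> In x l.

(* Infinite biosphere: vertex type V, edge relation E (E v w = "v is a parent of w"),
   time function t. *)
Definition infinite_biosphere {V : Type} (E : V -> V -> Prop) (t : V -> R) : Prop :=
  (forall v w, E v w -> t v < t w) /\
  (forall r : R, finite_pred (fun v => t v < r)) /\
  (forall v, finite_pred (fun w => E v w)) /\
  ~ finite_pred (fun _ : V => True).

Definition descendant {V : Type} (E : V -> V -> Prop) (v w : V) : Prop :=
  clos_trans V E v w.

Definition IAP {V : Type} (E : V -> V -> Prop) (S : V -> Prop) : Prop :=
  forall v, S v ->
    ~ ( ~ finite_pred (fun w => S w /\ descendant E v w) /\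
        ~ finite_pred (fun w => S w /\ ~ descendant E v w)).

Definition CONV {V : Type} (E : V -> V -> Prop) (S : V -> Prop) : Prop :=
  forall v, (exists a, S a /\ descendant E a v) ->
            (exists d, S d /\ descendant E v d) -> S v.

Definition CA {V : Type} (E : V -> V -> Prop) (S : V -> Prop) : Prop :=
  exists v, S v /\ forall w, S w -> w <> v -> descendant E v w.

Definition REF {V : Type} (E : V -> V -> Prop) (S : V -> Prop) : Prop :=
  forall v, S v -> ~ finite_pred (fun w => descendant E v w) ->
    ~ finite_pred (fun w => S w /\ descendant E v w).

Definition good {V : Type} (E : V -> V -> Prop) (S : V -> Prop) : Prop :=
  IAP E S /\ CONV E S /\ CA E S /\ REF E S.

(* Main.v *)
Require Import Defs.
From Stdlib Require Import Reals List Relations Classical ClassicalEpsilon Lra Lia Cantor.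
Open Scope R_scope.

Lemma fin_incl {V : Type} (P Q : V -> Prop) :
  finite_pred Q -> (forall x, P x -> Q x) -> finite_pred P.
Proof. intros [l Hl] H. exists l. auto. Qed.

Lemma fin_or {V : Type} (P Q : V -> Prop) :
  finite_pred P -> finite_pred Q -> finite_pred (fun x => P x \/ Q x).
Proof.
  intros [l1 H1] [l2 H2]. exists (l1 ++ l2). intros x [Hx|Hx]; apply in_or_app; auto.
Qed.

Lemma fin_list_union {V A : Type} (l : list A) (R : A -> V -> Prop) :
  (forall a, In a l -> finite_pred (R a)) ->
  finite_pred (fun x => exists a, In a l /\ R a x).
Proof.
  induction l as [|a l IH]; intros H.
  - exists nil. intros x [a [[] _]].
  - destruct (H a (or_introl eq_refl)) as [l1 H1].
    destruct IH as [l2 H2]. { intros b Hb. apply H. right. exact Hb. }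
    exists (l1 ++ l2). intros x [b [[Hb|Hb] Hr]]; apply in_or_app.
    + subst. left. auto.
    + right. apply H2. eauto.
Qed.

Lemma unb {V : Type} (t : V -> R) (Q : V -> Prop) :
  (exists x, Q x) -> (forall x, Q x -> exists x', Q x' /\ t x < t x') ->
  ~ finite_pred Q.
Proof.
  intros [x0 Hx0] Hs [l Hl].
  assert (forall l' : list V, forall x0, Q x0 -> exists w, Q w /\ ~ In w l' /\ t x0 <= t w)
    as Key.
  { induction l' as [|a l' IH]; intros y Hy.
    - exists y. split; [auto|split; [auto|lra]].
    - destruct (IH y Hy) as [w [Hw [Hn Ht]]].
      destruct (classic (w = a)) as [Ea|Na].
      + subst a. destruct (Hs w Hw) as [x1 [Hx1 Ht1]].
        destruct (IH x1 Hx1) as [w' [Hw' [Hn' Ht']]].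
        exists w'. split; auto. split; [|lra].
        intros [E'|E']; [subst; lra|auto].
      + exists w. split; auto. split; [|lra]. intros [E'|E']; [congruence|auto]. }
  destruct (Key l x0 Hx0) as [w [Hw [Hn _]]]. apply Hn. auto.
Qed.

Lemma desc_t {V : Type} (E : V -> V -> Prop) (t : V -> R) :
  (forall v w, E v w -> t v < t w) -> forall x y, descendant E x y -> t x < t y.
Proof.
  intros H x y D. induction D; eauto. lra.
Qed.

Lemma desc_irr {V : Type} (E : V -> V -> Prop) (t : V -> R) :
  (forall v w, E v w -> t v < t w) -> forall x, ~ descendant E x x.
Proof. intros H x D. apply desc_t with (t := t) in D; auto. lra. Qed.

Lemma desc_trans {V : Type} (E : V -> V -> Prop) x y z :
  descendant E x y -> descendant E y z -> descendant E x z.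
Proof. intros. eapply t_trans; eauto. Qed.

Lemma desc_step {V : Type} (E : V -> V -> Prop) x y :
  E x y -> descendant E x y.
Proof. intros. apply t_step. auto. Qed.

Lemma fin_empty {V : Type} (P : V -> Prop) : (forall x, ~ P x) -> finite_pred P.
Proof. intros H. exists nil. intros x Hx. exfalso. eapply H; eauto. Qed.

Lemma koenig_step {V : Type} (E : V -> V -> Prop) (X : V -> Prop) x :
  finite_pred (fun w => E x w) ->
  ~ finite_pred (fun z => X z /\ descendant E x z) ->
  exists c, E x c /\ ~ finite_pred (fun z => X z /\ (c = z \/ descendant E c z)).
Proof.
  intros [l Hl] Hinf. apply NNPP. intro Hno. apply Hinf.
  eapply fin_incl.
  - apply (fin_list_union l (fun c z => E x c /\ X z /\ (c = z \/ descendant E c z))).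
    intros c Hc. destruct (classic (E x c)) as [Ec|Nc].
    + apply NNPP. intro Hf. apply Hno. exists c. split; auto.
      intro Hf2. apply Hf. eapply fin_incl; [exact Hf2|]. simpl. tauto.
    + apply fin_empty. tauto.
  - intros z [Xz Dz]. apply clos_trans_t1n_iff in Dz.
    destruct Dz as [z Exz | y z Exy Dyz].
    + exists z. split; auto.
    + exists y. split; auto. split; auto. split; auto. right.
      apply clos_trans_t1n_iff. auto.
Qed.

Lemma ray_exists {V : Type} (E : V -> V -> Prop) (Q : V -> Prop) (v : V) :
  Q v -> (forall x, Q x -> exists y, E x y /\ Q y) ->
  exists p : nat -> V, p O = v /\ forall k, E (p k) (p (S k)) /\ Q (p k).
Proof.
  intros Hv Hs.
  assert (H : forall x, exists y, Q x -> E x y /\ Q y).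
  { intro x. destruct (classic (Q x)) as [Qx|Nq].
    - destruct (Hs x Qx) as [y Hy]. exists y. auto.
    - exists x. tauto. }
  pose (f := fun x => proj1_sig (constructive_indefinite_description _ (H x))).
  assert (Hf : forall x, Q x -> E x (f x) /\ Q (f x)).
  { intro x. unfold f. destruct (constructive_indefinite_description _ (H x)). simpl. auto. }
  exists (fix p k := match k with O => v | S k' => f (p k') end).
  split; auto.
  assert (HQ : forall k, Q ((fix p k := match k with O => v | S k' => f (p k') end) k)).
  { induction k; simpl; auto. apply Hf. auto. }
  intro k. split; auto. simpl. apply Hf. auto.
Qed.

Lemma children_fin {V : Type} (E : V -> V -> Prop) (P : V -> Prop) :
  (forall x, finite_pred (fun w => E x w)) -> finite_pred P ->
  finite_pred (fun c => exists p, P p /\ E p c).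
Proof.
  intros Hc [l Hl]. eapply fin_incl.
  - apply (fin_list_union l (fun p c => E p c)). intros a _. apply Hc.
  - intros c [p [Pp Ep]]. exists p. auto.
Qed.

Lemma inf_nonempty {V : Type} (P : V -> Prop) : ~ finite_pred P -> exists x, P x.
Proof. intros H. apply NNPP. intro N. apply H. apply fin_empty. intros x Px. apply N. eauto. Qed.

Lemma fin_single {V : Type} (c : V) : finite_pred (fun w => w = c).
Proof. exists (c :: nil). intros x ->. left. auto. Qed.

Lemma exit_lemma {V : Type} (E : V -> V -> Prop) (S : V -> Prop) r z :
  S r -> ~ S z -> descendant E r z ->
  exists p c, S p /\ E p c /\ ~ S c /\ (c = z \/ descendant E c z) /\
              (p = r \/ descendant E r p).
Proof.
  intros Sr Sz D. apply clos_trans_tn1_iff in D. induction D as [z Erz| z' z Ez' D IH].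
  - exists r, z. auto 10.
  - destruct (classic (S z')) as [Sz'|Nz'].
    + exists z', z. split; auto. split; auto. split; auto. split; auto.
      right. apply clos_trans_tn1_iff. auto.
    + destruct (IH Nz') as [p [c [Sp [Epc [Nc [Hc Hp]]]]]].
      exists p, c. repeat split; auto. right. destruct Hc as [<-|Hc].
      * apply desc_step; auto.
      * eapply desc_trans; eauto. apply desc_step; auto.
Qed.

Lemma chain_union {V : Type} (E : V -> V -> Prop) (t : V -> R)
  (HG : infinite_biosphere E t) (Cs : nat -> V -> Prop) (r : V) :
  (forall n, good E (Cs n)) -> (forall n x, Cs n x -> Cs (S n) x) ->
  (forall n, Cs n r) -> (forall n w, Cs n w -> w <> r -> descendant E r w) ->
  good E (fun x => exists n, Cs n x).
Proof.
  intros Hg Hmono Hr Hroot.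
  destruct HG as [Ht [Hfin [Hch Hinf]]].
  assert (Mono : forall n m x, (n <= m)%nat -> Cs n x -> Cs m x).
  { intros n m x Hle. induction Hle; auto. }
  set (U := fun x => exists n, Cs n x).
  split; [|split; [|split]].
  -
    intros y [m Hym] [Hd Hnd].
    destruct (classic (finite_pred (fun w => descendant E y w))) as [Dfin|Dinf].
    { apply Hd. eapply fin_incl; [exact Dfin|]. simpl. tauto. }
    destruct (Hg m) as [IAPm [CONVm [CAm REFm]]].
    pose proof (REFm y Hym Dinf) as Rm.
    assert (FA : finite_pred (fun w => Cs m w /\ ~ descendant E y w)).
    { apply NNPP. intro N. exact (IAPm y Hym (conj Rm N)). }
    set (B := fun w => U w /\ ~ descendant E y w /\ ~ Cs m w).
    assert (IB : ~ finite_pred B).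
    { intro FB. apply Hnd. eapply fin_incl; [apply (fin_or _ _ FA FB)|].
      intros w [Uw Nw]. destruct (classic (Cs m w)); [left|right]; unfold B; auto. }
    destruct (children_fin E _ Hch FA) as [lY HlY].
    set (Y' := fun c w => B w /\ (exists p, Cs m p /\ E p c) /\ ~ Cs m c /\ U c /\
                          (c = w \/ descendant E c w)).
    assert (Cov : forall w, B w -> exists c, In c lY /\ Y' c w).
    { intros w Bw. destruct Bw as [[k Hk] [Nyw Nmw]] eqn:EB.
      assert (Nwr : w <> r). { intros ->. apply Nmw. auto. }
      pose proof (Hroot k w Hk Nwr) as Drw.
      destruct (exit_lemma E (Cs m) r w (Hr m) Nmw Drw)
        as [p [c [Sp [Epc [Nc [Hc Hp]]]]]].
      assert (Drc : descendant E r c).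
      { destruct Hp as [<-|Hp]; [apply desc_step; auto|].
        eapply desc_trans; eauto. apply desc_step; auto. }
      assert (Uc : U c).
      { exists k. destruct Hc as [->|Hc]; auto.
        destruct (Hg k) as [_ [CONVk _]]. apply CONVk; eauto. }
      assert (Nyp : ~ descendant E y p).
      { intro Dyp. apply Nyw. assert (Dyc : descendant E y c).
        { eapply desc_trans; eauto. apply desc_step; auto. }
        destruct Hc as [<-|Hc]; auto. eapply desc_trans; eauto. }
      exists c. split.
      - apply HlY. exists p. auto.
      - unfold Y'. split; [exact Bw|]. split; [eauto|]. auto. }
    assert (Hc : exists c, In c lY /\ ~ finite_pred (Y' c)).
    { apply NNPP. intro N. apply IB. eapply fin_incl.
      - apply (fin_list_union lY Y'). intros c Hc. apply NNPP. intro N2. apply N. eauto.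
      - exact Cov. }
    destruct Hc as [c [_ Ic]].
    destruct (inf_nonempty _ Ic) as [w0 [_ [[p [Smp Epc]] [Nmc [[k Hkc] _]]]]].
    assert (Dcinf : ~ finite_pred (fun w => descendant E c w)).
    { intro F. apply Ic. eapply fin_incl.
      - apply (fin_or (fun w => w = c) _ (fin_single c) F).
      - intros w [_ [_ [_ [_ [H|H]]]]]; auto. }
    set (K := Nat.max k m).
    assert (HcK : Cs K c). { apply (Mono k); auto. lia. }
    destruct (Hg K) as [IAPK [_ [_ REFK]]].
    pose proof (REFK c HcK Dcinf) as RK.
    assert (FK : finite_pred (fun w => Cs K w /\ ~ descendant E c w)).
    { apply NNPP. intro N. exact (IAPK c HcK (conj RK N)). }
    apply Rm. eapply fin_incl; [exact FK|]. intros w [Hmw _]. split.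
    + apply (Mono m); auto. lia.
    + intro Dcw. apply Nmc. apply CONVm; [exists p; split; auto; apply desc_step; auto|].
      eauto.
  -
    intros x [a [[n1 Ha] Dax]] [d [[n2 Hd] Dxd]].
    exists (Nat.max n1 n2). destruct (Hg (Nat.max n1 n2)) as [_ [CONVk _]].
    apply CONVk.
    + exists a. split; auto. apply (Mono n1); auto. lia.
    + exists d. split; auto. apply (Mono n2); auto. lia.
  - exists r. split. { exists O. auto. } intros w [n Hn] Hne. eauto.
  - intros y [n Hn] Dinf F. destruct (Hg n) as [_ [_ [_ REFn]]].
    apply (REFn y Hn Dinf). eapply fin_incl; [exact F|]. intros w [H1 H2]. split; auto. exists n; auto.
Qed.

Definition isray {V : Type} (E : V -> V -> Prop) (v : V) (p : nat -> V) : Prop :=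
  p O = v /\ forall k, E (p k) (p (S k)).

Definition Wv {V : Type} (E : V -> V -> Prop) (v y : V) : Prop := y = v \/ descendant E v y.

Definition Sv {V : Type} (E : V -> V -> Prop) (v : V) (p : nat -> V) (y : V) : Prop :=
  Wv E v y /\ exists j, descendant E y (p j).

Lemma ray_desc {V : Type} (E : V -> V -> Prop) v p :
  isray E v p -> forall j d, descendant E (p j) (p (S d + j)%nat).
Proof.
  intros [_ H] j d. induction d.
  - apply desc_step. apply H.
  - eapply desc_trans; [exact IHd|]. apply desc_step. apply H.
Qed.

Lemma ray_W {V : Type} (E : V -> V -> Prop) v p :
  isray E v p -> forall k, Wv E v (p k).
Proof.
  intros Hr k. destruct k.
  - left. apply Hr.
  - right. pose proof (ray_desc E v p Hr O k) as D. destruct Hr as [H0 _].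
    rewrite H0 in D. replace (S k + 0)%nat with (S k) in D by lia. exact D.
Qed.

Lemma Wv_desc {V : Type} (E : V -> V -> Prop) v x y :
  Wv E v x -> descendant E x y -> Wv E v y.
Proof. intros [->|H] D; right; auto. eapply desc_trans; eauto. Qed.

Lemma Sv_pk {V : Type} (E : V -> V -> Prop) v p k :
  isray E v p -> Sv E v p (p k).
Proof.
  intros Hr. split; [apply ray_W; auto|]. exists (S k). apply desc_step. apply Hr.
Qed.

Lemma good_Sv {V : Type} (E : V -> V -> Prop) (t : V -> R) v p :
  (forall v w, E v w -> t v < t w) -> isray E v p ->
  (forall y, Sv E v p y -> finite_pred (fun w => Sv E v p w /\ ~ descendant E y w)) ->
  good E (Sv E v p).
Proof.
  intros Ht Hr Hfin. split; [|split; [|split]].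
  - intros y Hy [_ N]. apply N. apply Hfin. auto.
  - intros x [a [[Wa _] Dax]] [d [[_ [j Hj]] Dxd]]. split.
    + eapply Wv_desc; eauto.
    + exists j. eapply desc_trans; eauto.
  - exists v. split.
    + pose proof (Sv_pk E v p O Hr) as H. destruct Hr as [H0 _]. rewrite H0 in H. exact H.
    + intros w [[->|Hw] _] Hne; [congruence|auto].
  - intros y Hy _. apply (unb t).
    + destruct Hy as [Wy [j Hj]]. exists (p j). split; auto. apply Sv_pk. auto.
    + intros x [[Wx [j Hj]] Dyx]. exists (p j). split; [split; [apply Sv_pk; auto|]|].
      * eapply desc_trans; eauto.
      * eapply desc_t; eauto.
Qed.

Lemma koenig_X {V : Type} (E : V -> V -> Prop) (t : V -> R) v p y :
  (forall v w, E v w -> t v < t w) -> (forall x, finite_pred (fun w => E x w)) ->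
  isray E v p -> Sv E v p y -> y <> v ->
  ~ finite_pred (fun w => Sv E v p w /\ ~ descendant E y w) ->
  exists q, isray E v q /\ forall k, Sv E v p (q k) /\ ~ descendant E y (q k).
Proof.
  intros Ht Hch Hr Hy Hyv Hinf.
  set (X := fun z => Sv E v p z /\ ~ descendant E y z /\ z <> y).
  set (K := fun x => X x /\ ~ finite_pred (fun z => X z /\ descendant E x z)).
  assert (Dvy : descendant E v y). { destruct Hy as [[H|H] _]; [congruence|auto]. }
  assert (Kv : K v).
  { unfold K, X. split.
    - split; [|split].
      + pose proof (Sv_pk E v p O Hr) as H. destruct Hr as [H0 _]. rewrite H0 in H. exact H.
      + intro D. apply (desc_irr E t Ht v). eapply desc_trans; eauto.
      + auto.
    - intro F. apply Hinf. eapply fin_incl.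
      + apply (fin_or _ _ (fin_or _ _ (fin_single y) (fin_single v)) F).
      + intros w [Sw Nw]. destruct (classic (w = y)) as [->|Nwy]; [left; left; auto|].
        destruct Sw as [[->|Dw] Hs]; [left; right; auto|].
        right. exact (conj (conj (conj (or_intror Dw) Hs) (conj Nw Nwy)) Dw). }
  assert (Kstep : forall x, K x -> exists c, E x c /\ K c).
  { unfold K. intros x [Xx Ix]. destruct (koenig_step E X x (Hch x) Ix) as [c [Exc Ic]].
    exists c. split; auto.
    destruct (inf_nonempty _ Ic) as [z [[[Wz [j Hj]] [Nyz Nzy]] Hcz]].
    assert (Xc : X c).
    { unfold X. split; [split|split].
      - destruct Xx as [[Wx _] _]. apply (Wv_desc E v x c Wx). apply desc_step; auto.
      - exists j. destruct Hcz as [<-|Hcz]; auto. eapply desc_trans; eauto.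
      - intro D. apply Nyz. destruct Hcz as [<-|Hcz]; auto. eapply desc_trans; eauto.
      - intros ->. destruct Hcz as [<-|Hcz]; [congruence|auto]. }
    split; auto. intro F. apply Ic. eapply fin_incl.
    - apply (fin_or _ _ (fin_single c) F).
    - intros w [Xw [H|H]]; [left; auto|right; auto]. }
  destruct (ray_exists E K v Kv Kstep) as [q [Hq0 Hq]].
  exists q. split.
  - split; auto. intro k. apply Hq.
  - intro k. destruct (Hq k) as [_ [[Sq [Nq _]] _]]. auto.
Qed.

Lemma child_sees {V : Type} (E : V -> V -> Prop) v p y :
  isray E v p -> Sv E v p y -> exists c, E y c /\ Sv E v p c.
Proof.
  intros Hr [Wy [j Hj]]. apply clos_trans_t1n_iff in Hj.
  remember (p j) as pj eqn:Epj.
  destruct Hj as [z Eyz | c z Eyc Dcz].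
  - exists z. split; auto. split.
    + apply (Wv_desc E v y z Wy). apply desc_step; auto.
    + exists (S j). subst z. apply desc_step. apply Hr.
  - exists c. split; auto. split.
    + apply (Wv_desc E v y c Wy). apply desc_step; auto.
    + exists j. subst z. apply clos_trans_t1n_iff. auto.
Qed.

Lemma pigeon {V : Type} (l : list V) (Q : nat -> V -> Prop) :
  (forall n c, Q (S n) c -> Q n c) -> (forall n, exists c, In c l /\ Q n c) ->
  exists c, In c l /\ forall n, Q n c.
Proof.
  intros Hanti.
  assert (Anti : forall n m c, (n <= m)%nat -> Q m c -> Q n c).
  { intros n m c Hle. induction Hle; auto. }
  induction l as [|a l IH]; intros H.
  - destruct (H O) as [c [[] _]].
  - destruct (classic (forall n, Q n a)) as [Ha|Ha].
    + exists a. split; [left|]; auto.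
    + apply not_all_ex_not in Ha. destruct Ha as [n0 Hn0].
      destruct IH as [c [Hc Hq]].
      * intro n. destruct (H (Nat.max n n0)) as [c [[<-|Hc] Hq]].
        -- exfalso. apply Hn0. apply (Anti _ (Nat.max n n0)); auto. lia.
        -- exists c. split; auto. apply (Anti _ (Nat.max n n0)); auto. lia.
      * exists c. split; [right|]; auto.
Qed.

Lemma limit_ray {V : Type} (E : V -> V -> Prop) v (P : nat -> nat -> V) :
  (forall x, finite_pred (fun w => E x w)) ->
  (forall n, isray E v (P n)) ->
  (forall n y, Sv E v (P (S n)) y -> Sv E v (P n) y) ->
  exists q, isray E v q /\ forall n y, Sv E v q y -> Sv E v (P n) y.
Proof.
  intros Hch Hr Hdec.
  set (L := fun y => forall n, Sv E v (P n) y).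
  assert (Lv : L v).
  { intro n. pose proof (Sv_pk E v (P n) O (Hr n)) as H. destruct (Hr n) as [H0 _].
    rewrite H0 in H. exact H. }
  assert (Ls : forall x, L x -> exists c, E x c /\ L c).
  { intros x Lx. destruct (Hch x) as [l Hl].
    destruct (pigeon l (fun n c => E x c /\ Sv E v (P n) c)) as [c [_ Hc2]].
    - intros n c [H1 H2]. split; auto.
    - intro n. destruct (child_sees E v (P n) x (Hr n) (Lx n)) as [c [Ec Sc]].
      exists c. auto.
    - exists c. split; [apply (Hc2 O)|]. intro n. apply Hc2. }
  destruct (ray_exists E L v Lv Ls) as [q [Hq0 Hq]].
  exists q. split.
  - split; auto. intro k. apply Hq.
  - intros n y [Wy [j Hj]]. destruct (Hq j) as [_ Lq].
    destruct (Lq n) as [_ [i Hi]]. split; auto. exists i. eapply desc_trans; eauto.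
Qed.

Lemma enum_exists {V : Type} (E : V -> V -> Prop) (t : V -> R) (v : V) :
  infinite_biosphere E t -> exists e : nat -> V, forall x, exists n, e n = x.
Proof.
  intros [_ [Hfin _]].
  pose (Lk := fun k : nat => proj1_sig (constructive_indefinite_description _ (Hfin (INR k)))).
  assert (HL : forall k x, t x < INR k -> In x (Lk k)).
  { intros k x H. unfold Lk. destruct (constructive_indefinite_description _ _) as [l Hl]. simpl. auto. }
  exists (fun n => let '(k, i) := Cantor.of_nat n in nth i (Lk k) v).
  intro x. destruct (INR_archimed 1 (t x)) as [k Hk]; [lra|].
  assert (Hin : In x (Lk k)) by (apply HL; lra).
  destruct (In_nth _ _ v Hin) as [i [_ Hi]].
  exists (Cantor.to_nat (k, i)). rewrite Cantor.cancel_of_to. exact Hi.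
Qed.

Lemma exists_good {V : Type} (E : V -> V -> Prop) (t : V -> R) (v : V) :
  infinite_biosphere E t -> exists S, S v /\ good E S.
Proof.
  intros HG. pose proof HG as [Ht [Hfin [Hch Hinf]]].
  destruct (classic (finite_pred (fun w => descendant E v w))) as [Dfin|Dinf].
  { exists (Wv E v). split; [left; auto|].
    assert (Sub : forall y w, Wv E v y -> descendant E y w -> descendant E v w).
    { intros y w [->|H] D; auto. eapply desc_trans; eauto. }
    split; [|split; [|split]].
    - intros y Hy [Hd _]. apply Hd. eapply fin_incl; [exact Dfin|]. intros w [_ D]. exact (Sub y w Hy D).
    - intros x [a [Wa D]] _. eapply Wv_desc; eauto.
    - exists v. split; [left; auto|]. intros w [->|H] Hne; [congruence|auto].
    - intros y Hy Dy. exfalso. apply Dy. eapply fin_incl; [exact Dfin|]. intros w D. exact (Sub y w Hy D). }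
  destruct (enum_exists E t v HG) as [e He].
  destruct (ray_exists E (fun x => Wv E v x /\ ~ finite_pred (fun w => descendant E x w)) v)
    as [p0 [Hp00 Hp0]].
  { split; [left|]; auto. }
  { intros x [Wx Ix].
    destruct (koenig_step E (fun _ => True) x (Hch x)) as [c [Exc Ic]].
    { intro F. apply Ix. eapply fin_incl; [exact F|]. intros w D. split; auto. }
    exists c. split; auto. split.
    - apply (Wv_desc E v x c Wx). apply desc_step; auto.
    - intro F. apply Ic. eapply fin_incl; [apply (fin_or _ _ (fin_single c) F)|].
      intros w [_ [H|H]]; [left|right]; auto. }
  assert (Hr0 : isray E v p0). { split; auto. intro k. apply Hp0. }
  set (incl := fun (A B : V -> Prop) => forall y, A y -> B y).
  set (Pstep := fun p u q => isray E v q /\ incl (Sv E v q) (Sv E v p) /\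
     ((exists q', isray E v q' /\ incl (Sv E v q') (Sv E v p) /\ ~ Sv E v q' u) ->
      ~ Sv E v q u)).
  set (step := fun p u => epsilon (inhabits p) (Pstep p u)).
  assert (Hstep : forall p u, isray E v p -> Pstep p u (step p u)).
  { intros p u Hp. unfold step. apply epsilon_spec.
    destruct (classic (exists q', isray E v q' /\ incl (Sv E v q') (Sv E v p) /\ ~ Sv E v q' u))
      as [[q' Hq']|N].
    - exists q'. unfold Pstep. split; [apply Hq'|]. split; [apply Hq'|]. intros _. apply Hq'.
    - exists p. unfold Pstep. split; auto. split; [intros y Hy; auto|]. intro H. contradiction. }
  set (P := fix P n := match n with O => p0 | S n' => step (P n') (e n') end).
  assert (HP : forall n, isray E v (P n)).
  { induction n; simpl; auto. apply (Hstep (P n) (e n) IHn). }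
  assert (HPs : forall n, Pstep (P n) (e n) (P (S n))).
  { intro n. simpl. apply Hstep. auto. }
  destruct (limit_ray E v P Hch HP) as [q [Hq Hqsub]].
  { intros n y H. destruct (HPs n) as [_ [Hi _]]. apply Hi. auto. }
  exists (Sv E v q). split.
  { pose proof (Sv_pk E v q O Hq) as H. destruct Hq as [H0 _]. rewrite H0 in H. exact H. }
  apply (good_Sv E t v q Ht Hq).
  intros y Hy. apply NNPP. intro Ninf.
  destruct (classic (y = v)) as [->|Nyv].
  { apply Ninf. eapply fin_incl; [apply (fin_single v)|].
    intros w [[[->|D] _] N]; [auto|contradiction]. }
  destruct (koenig_X E t v q y Ht Hch Hq Hy Nyv Ninf) as [q' [Hq' Hq'k]].
  destruct (He y) as [n Hn].
  destruct (HPs n) as [_ [_ Hex]].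
  apply Hex.
  - exists q'. split; auto. split.
    + intros z [Wz [j Hj]]. destruct (Hq'k j) as [[_ [i Hi]] _]. apply (Hqsub n).
      split; auto. exists i. eapply desc_trans; eauto.
    + rewrite Hn. intros [_ [j Hj]]. destruct (Hq'k j) as [_ N]. auto.
  - rewrite <- Hn in Hy. apply (Hqsub (S n)). auto.
Qed.

Lemma min_fin {V : Type} (t : V -> R) (P : V -> Prop) :
  finite_pred P -> (exists x, P x) -> exists x, P x /\ forall y, P y -> t x <= t y.
Proof.
  intros [l Hl]. revert P Hl. induction l as [|a l IH]; intros P Hl [x0 Hx0].
  - destruct (Hl x0 Hx0).
  - destruct (classic (exists x, P x /\ x <> a)) as [Hne|Hno].
    + destruct (IH (fun x => P x /\ x <> a)) as [m [[Pm Nm] Hm]].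
      * intros x [Px Nx]. destruct (Hl x Px); [congruence|auto].
      * auto.
      * destruct (classic (P a /\ t a < t m)) as [[Pa Ha]|Ha].
        -- exists a. split; auto. intros y Py. destruct (classic (y = a)) as [->|Nya]; [lra|].
           specialize (Hm y (conj Py Nya)). lra.
        -- exists m. split; auto. intros y Py. destruct (classic (y = a)) as [->|Nya].
           ++ apply Rnot_lt_le. intro. apply Ha. auto.
           ++ apply Hm. auto.
    + exists a. assert (Pa : P a).
      { destruct (classic (x0 = a)) as [<-|N]; auto. exfalso. apply Hno. eauto. }
      split; auto. intros y Py. destruct (classic (y = a)) as [->|N]; [lra|].
      exfalso. apply Hno. eauto.
Qed.

Theorem mainTheorem9 (V : Type) (E : V -> V -> Prop) (t : V -> R)
  (HG : infinite_biosphere E t) (v : V) :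
  exists S : V -> Prop,
    S v /\ good E S /\
    forall T : V -> Prop,
      (forall x, S x -> T x) -> (exists y, T y /\ ~ S y) -> ~ good E T.
Proof.
  pose proof HG as [Ht [Hfin [Hch Hinf]]].
  set (R0 := fun u => (u = v \/ descendant E u v) /\ exists S, S v /\ good E S /\ S u /\
                       (forall w, S w -> w <> u -> descendant E u w)).
  destruct (min_fin t R0) as [r [[Hrv [Sr [Srv [Srg [Srr Srroot]]]]] Hrmin]].
  { eapply fin_incl; [apply (Hfin (t v + 1))|]. intros u [[->|D] _]; [lra|].
    apply (desc_t E t Ht) in D. lra. }
  { destruct (exists_good E t v HG) as [S0 [S0v S0g]].
    pose proof S0g as [_ [_ [[u [S0u Hu]] _]]]. exists u. split.
    - destruct (classic (v = u)) as [<-|N]; [left; auto|right; apply Hu; auto].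
    - exists S0. auto. }
  assert (RootT : forall T, good E T -> T v -> T r ->
                  forall w, T w -> w <> r -> descendant E r w).
  { intros T Tg Tv Tr. pose proof Tg as [_ [_ [[r' [Tr' Hr']] _]]].
    assert (R0r' : R0 r').
    { split.
      - destruct (classic (v = r')) as [<-|N]; [left; auto|right; apply Hr'; auto].
      - exists T. auto. }
    specialize (Hrmin r' R0r').
    assert (r = r').
    { apply NNPP. intro N. specialize (Hr' r Tr N). apply (desc_t E t Ht) in Hr'. lra. }
    subst r'. auto. }
  destruct (enum_exists E t v HG) as [e He].
  set (incl := fun (A B : V -> Prop) => forall y, A y -> B y).
  set (Pst := fun C u T => good E T /\ incl C T /\
              ((exists T', good E T' /\ incl C T' /\ T' u) -> T u)).
  set (step := fun C u => epsilon (inhabits C) (Pst C u)).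
  assert (Hstep : forall C u, good E C -> Pst C u (step C u)).
  { intros C u HC. unfold step. apply epsilon_spec.
    destruct (classic (exists T', good E T' /\ incl C T' /\ T' u)) as [[T' HT']|N].
    - exists T'. unfold Pst. split; [apply HT'|]. split; [apply HT'|]. intros _. apply HT'.
    - exists C. unfold Pst. split; auto. split; [intros y Hy; auto|]. intro H. contradiction. }
  set (Cs := fix Cs n := match n with O => Sr | S n' => step (Cs n') (e n') end).
  assert (HC : forall n, good E (Cs n) /\ incl Sr (Cs n)).
  { induction n; simpl.
    - split; auto. intros y Hy; auto.
    - destruct IHn as [g i]. destruct (Hstep (Cs n) (e n) g) as [g' [i' _]].
      split; auto. intros y Hy. apply i'. apply i. auto. }
  assert (HCs : forall n, Pst (Cs n) (e n) (Cs (S n))).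
  { intro n. simpl. apply Hstep. apply HC. }
  exists (fun x => exists n, Cs n x).
  split; [exists O; exact Srv|]. split.
  - apply (chain_union E t HG Cs r).
    + intro n. apply HC.
    + intros n x H. destruct (HCs n) as [_ [Hi _]]. apply Hi. auto.
    + intro n. apply (proj2 (HC n)). auto.
    + intros n w Hw Hne. apply (RootT (Cs n)); auto.
      * apply HC.
      * apply (proj2 (HC n)). auto.
      * apply (proj2 (HC n)). auto.
  - intros T Hsub [y [Ty Ny]] Tg. destruct (He y) as [n Hn].
    destruct (HCs n) as [_ [_ Hex]]. apply Ny. exists (S n). rewrite <- Hn. apply Hex.
    exists T. split; auto. split.
    + intros x Hx. apply Hsub. eauto.
    + rewrite Hn. auto.
Qed.
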